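(* Consider the deterministic split-node max-neighbour algorithm described in the context, on a dynamic graph $(G_r)_{r\ge1}$ with node set $V$. For every round $r\ge1$, \[ \phi(V,w_r)\le\phi(V,w_{r-1})-D_r/2 . \]
   Context: Setting: a fixed set $V$ of $n$ nodes, a sequence of connected graphs $G_r=(V,E_r)$ ($r\ge1$), $N_r(v)$ the neighbours of $v$ in $G_r$, non-negative real loads $w_0(v)$, and $w_r(v)$ the load of $v$ at the end of round $r$. For a finite set $U$ and $w:U\to\mathbb{R}_{\ge0}$ define $\phi(U,w)=\sum_{\{u,v\}\subseteq U}|w(u)-w(v)|$ (sum over unordered pairs of distinct elements). Algorithm: each node $v$ is split into two virtual nodes $v_s$ (sender) and $v_a$ (receiver). In round $r$: set $w_r^1(v_s)=w_r^1(v_a)=w_{r-1}(v)/2$. Each $v_s$ sends a proposal to $u_a$ where $u\in N_r(v)$ maximizes $|w_{r-1}(u)-w_{r-1}(v)|$ (ties broken by a fixed deterministic rule). Each $v_a$ that received proposals accepts exactly one, from $u_s$ with $u$ maximizing $|w_{r-1}(u)-w_{r-1}(v)|$ among proposers (deterministic tie-breaking). For each accepted pair $(u_s,v_a)$, set $w_r^2(u_s)=w_r^2(v_a)=(w_r^1(u_s)+w_r^1(v_a))/2$; other virtual nodes keep their value. Then $w_r(v)=w_r^2(v_s)+w_r^2(v_a)$. An ordered pair $(u,v)$ connects at round $r$ if $u_s$'s proposal to $v_a$ was accepted in round $r$; $A_r$ is the set of ordered pairs that connect at round $r$, and \[ D_r=\frac12\sum_{(u,v)\in A_r}|w_{r-1}(u)-w_{r-1}(v)|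 . \] *)

(* Defs.v *)
From mathcomp Require Import all_boot all_order all_algebra.
Set Implicit Arguments. Unset Strict Implicit. Unset Printing Implicit Defensive.
Import Order.TTheory GRing.Theory Num.Theory.
Local Open Scope ring_scope.

Section Defs.
Variables (R : realFieldType) (V : finType).

Definition phi (w : V -> R) : R :=
  \sum_(u : V) \sum_(v : V | (enum_rank u < enum_rank v)%N) `|w u - w v|.

Definition simple_connected (E : rel V) : Prop :=
  symmetric E /\ irreflexive E /\ (forall u v : V, connect E u v).

(* prop v = Some u : the sender v_s proposes to u_a, with u a neighbour of v
   maximising |w(u) - w(v)|; None : v has no neighbour (no proposal). *)
Definition valid_prop (E : rel V) (w : V -> R) (prop : V -> option V) : Prop :=
  forall v : V,
    match prop v with
    | Some u => E v u /\ (forall u', E v u' -> `|w u' - w v| <= `|w u - w v|)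
    | None => forall u, ~~ E v u
    end.

(* acc v = Some u : the receiver v_a accepts the proposal of u_s, where u
   maximises |w(u) - w(v)| among the proposers of v; None : no proposals. *)
Definition valid_acc (w : V -> R) (prop acc : V -> option V) : Prop :=
  forall v : V,
    match acc v with
    | Some u => prop u = Some v /\
        (forall u', prop u' = Some v -> `|w u' - w v| <= `|w u - w v|)
    | None => forall u, prop u <> Some v
    end.

Definition sender_val (w : V -> R) (prop acc : V -> option V) (u : V) : R :=
  match prop u with
  | Some v => if acc v == Some u then (w u / 2 + w v / 2) / 2 else w u / 2
  | None => w u / 2
  end.

Definition receiver_val (w : V -> R) (acc : V -> option V) (v : V) : R :=
  match acc v with
  | Some u => (w u / 2 + w v / 2) / 2
  | None => w v / 2
  end.

Definition round_load (w : V -> R) (prop acc : V -> option V) (v : V) : R :=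
  sender_val w prop acc v + receiver_val w acc v.

Definition Dr (w : V -> R) (acc : V -> option V) : R :=
  (\sum_(u : V) \sum_(v : V | acc v == Some u) `|w u - w v|) / 2.

End Defs.

(* Main.v *)
Require Import Defs.
From mathcomp Require Import all_boot all_order all_algebra.
From mathcomp Require Import lra.
Import Order.TTheory GRing.Theory Num.Theory.
Local Open Scope ring_scope.



Lemma phi_half (R : realFieldType) (V : finType) (f : V -> R) :
  phi f = (\sum_u \sum_v `|f u - f v|) / 2.
Proof.
rewrite /phi.
have -> : \sum_u \sum_v `|f u - f v| =
   \sum_u \sum_v (if (enum_rank u < enum_rank v)%N then `|f u - f v| else 0)
 + \sum_u \sum_v (if (enum_rank v < enum_rank u)%N then `|f v - f u| else 0).
  rewrite -big_split /=; apply: eq_bigr => u _; rewrite -big_split /=.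
  apply: eq_bigr => v _.
  case: ltngtP => h; rewrite ?addr0 ?add0r //=; last first.
    by move/val_inj/enum_rank_inj: h => ->; rewrite subrr normr0.
  by rewrite distrC.
rewrite [X in _ + X]exchange_big /=.
have -> : \sum_u \sum_(v | (enum_rank u < enum_rank v)%N) `|f u - f v| =
   \sum_u \sum_v (if (enum_rank u < enum_rank v)%N then `|f u - f v| else 0).
  by apply: eq_bigr => u _; rewrite big_mkcond.
set S := \sum_u _. lra.
Qed.

Section Main.
Variables (R : realFieldType) (V : finType) (W : V -> R) (P A : V -> option V).
Hypothesis hacc : forall v u, A v = Some u -> P u = Some v.

Definition x1 (a : V * bool) : R := W a.1 / 2.
Definition pp (a : V * bool) : V * bool :=
  match a with
  | (u, true) => match P u with
                 | Some v => if A v == Some u then (v, false) else (u, true)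
                 | None => (u, true) end
  | (v, false) => match A v with Some u => (u, true) | None => (v, false) end
  end.

Lemma ppK : involutive pp.
Proof.
case=> u [] /=.
  case Pu: (P u) => [v|]; last by rewrite /= Pu.
  case: (A v =P Some u) => [Av|nAv] /=; first by rewrite Av.
  by rewrite Pu; case: (A v =P Some u).
case Au: (A u) => [v|]; last by rewrite /= Au.
by rewrite /= (hacc _ _ Au) Au eqxx.
Qed.

Definition x2 a := (x1 a + x1 (pp a)) / 2.

Lemma round_x2 u : round_load W P A u = x2 (u, true) + x2 (u, false).
Proof.
rewrite /round_load /sender_val /receiver_val /x2 /x1 /=.
case: (P u) => [v|] /=; [case: (A v =P Some u) => _ /= |]; case: (A u) => [v'|] /=; lra.
Qed.

Lemma sum_d : \sum_a `|x1 a - x1 (pp a)| = 2 * Dr W A.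
Proof.
set d := fun a => `|x1 a - x1 (pp a)|.
have dK a : d (pp a) = d a by rewrite /d ppK distrC.
have split1 : \sum_a d a = \sum_a (if a.2 then d a else 0) + \sum_a (if a.2 then 0 else d a).
  by rewrite -big_split; apply: eq_bigr => -[u []] _ /=; rewrite ?addr0 ?add0r.
have SR : \sum_a (if a.2 then d a else 0) = \sum_a (if a.2 then 0 else d a).
  transitivity (\sum_a (if (pp a).2 then 0 else d a)).
    apply: eq_bigr => -[u []] _ /=.
      rewrite /d /=; case Pu: (P u) => [v|] /=; last by rewrite subrr normr0.
      by case: (A v =P Some u) => _ //=; rewrite subrr normr0.
    rewrite /d /=; case Au: (A u) => [v|] //=.
    by rewrite subrr normr0.
  rewrite (reindex_inj (can_inj ppK)) /=.
  by apply: eq_bigr => a _; rewrite ppK dK.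
have RD : \sum_a (if a.2 then 0 else d a) = Dr W A.
  rewrite /Dr (eq_bigr _ (fun u _ => big_mkcond _ _)) exchange_big /=.
  rewrite (eq_bigr (fun a => (fun u (b : bool) => if b then 0 else d (u, b)) a.1 a.2)); last by case.
  rewrite -(pair_bigA _ (fun u (b : bool) => if b then 0 else d (u, b))) /=.
  rewrite [X in _ = X / 2](_ : _ = \sum_v match A v with Some u => `|W u - W v| | None => 0 end).
    rewrite big_distrl /=; apply: eq_bigr => v _; rewrite big_bool /= add0r /d /x1 /=.
    case: (A v) => [u|] /=; last by rewrite subrr normr0 mul0r.
    rewrite -mulrBl normrM distrC. rewrite ger0_norm; last by lra. by rewrite mulrC.
  apply: eq_bigr => v _; rewrite -big_mkcond /=; case: (A v) => [u|].
    rewrite (eq_bigl (fun u' => u' == u)) ?big_pred1_eq // => u'.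
    by apply/eqP/eqP => [[]|->].
  by rewrite big_pred0.
rewrite split1 -SR SR RD; lra.
Qed.


Lemma abs4 (a b c d : R) :
  2 * `|a + b - c - d| <= `|a - c| + `|a - d| + `|b - c| + `|b - d|.
Proof.
have h1 : `|a + b - c - d| <= `|a - c| + `|b - d|.
  by rewrite (_ : a + b - c - d = (a - c) + (b - d)) ?ler_normD //; lra.
have h2 : `|a + b - c - d| <= `|a - d| + `|b - c|.
  by rewrite (_ : a + b - c - d = (a - d) + (b - c)) ?ler_normD //; lra.
lra.
Qed.

Definition dd a := `|x1 a - x1 (pp a)|.
Definition FF a b := `|x1 a - x1 b| + `|x1 (pp a) - x1 (pp b)|
  + `|x1 a - x1 (pp b)| + `|x1 (pp a) - x1 b|.

Lemma x2diff a b : 4 * `|x2 a - x2 b| = 2 * `|x1 a + x1 (pp a) - x1 b - x1 (pp b)|.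
Proof.
rewrite /x2 (_ : _ - _ = (x1 a + x1 (pp a) - x1 b - x1 (pp b)) * 2^-1); last by lra.
rewrite normrM (ger0_norm (_ : 0 <= 2^-1)) ?invr_ge0 ?ler0n //; lra.
Qed.

Lemma pointwise a b :
  4 * `|x2 a - x2 b| + ((if b == a then 2 * dd a else 0)
     + (if b == pp a then 2 * dd a else 0)) <= FF a b.
Proof.
rewrite /FF /dd.
case: (b =P a) => [->|nba].
  rewrite subrr normr0 mulr0 add0r !subrr normr0.
  case: (a =P pp a) => [<-|_]; rewrite ?subrr ?normr0; first lra.
  rewrite distrC; lra.
case: (b =P pp a) => [->|nbpa].
  rewrite x2diff ppK.
  rewrite (_ : x1 a + x1 (pp a) - x1 (pp a) - x1 a = 0); last by lra.
  rewrite normr0 !subrr normr0 (distrC (x1 (pp a))); lra.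
rewrite x2diff.
have := abs4 (x1 a) (x1 (pp a)) (x1 b) (x1 (pp b)); lra.
Qed.

Lemma step2 : \sum_a \sum_b `|x2 a - x2 b| <=
  \sum_a \sum_b `|x1 a - x1 b| - \sum_a dd a.
Proof.
have F1 : \sum_a \sum_b `|x1 (pp a) - x1 (pp b)| = \sum_a \sum_b `|x1 a - x1 b|.
  rewrite [RHS](reindex_inj (can_inj ppK)) /=; apply: eq_bigr => a _.
  by rewrite [RHS](reindex_inj (can_inj ppK)).
have F2 : \sum_a \sum_b `|x1 a - x1 (pp b)| = \sum_a \sum_b `|x1 a - x1 b|.
  apply: eq_bigr => a _; by rewrite [RHS](reindex_inj (can_inj ppK)).
have F3 : \sum_a \sum_b `|x1 (pp a) - x1 b| = \sum_a \sum_b `|x1 a - x1 b|.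
  by rewrite [RHS](reindex_inj (can_inj ppK)).
have Wt a : \sum_b ((if b == a then 2 * dd a else 0)
     + (if b == pp a then 2 * dd a else 0)) = 4 * dd a.
  rewrite big_split /= -!big_mkcond !big_pred1_eq; lra.
have key : \sum_a \sum_b (4 * `|x2 a - x2 b| + ((if b == a then 2 * dd a else 0)
     + (if b == pp a then 2 * dd a else 0))) <= \sum_a \sum_b FF a b.
  by apply: ler_sum => a _; apply: ler_sum => b _; exact: pointwise.
have L : \sum_a \sum_b (4 * `|x2 a - x2 b| + ((if b == a then 2 * dd a else 0)
     + (if b == pp a then 2 * dd a else 0))) =
     4 * \sum_a \sum_b `|x2 a - x2 b| + 4 * \sum_a dd a.
  rewrite !mulr_sumr -big_split /=; apply: eq_bigr => a _.
  by rewrite big_split /= Wt mulr_sumr.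
have Rr : \sum_a \sum_b FF a b =
   \sum_a \sum_b `|x1 a - x1 b| + \sum_a \sum_b `|x1 (pp a) - x1 (pp b)|
   + \sum_a \sum_b `|x1 a - x1 (pp b)| + \sum_a \sum_b `|x1 (pp a) - x1 b|.
  rewrite -!big_split /=; apply: eq_bigr => a _; by rewrite -!big_split.
move: key; rewrite L Rr F1 F2 F3; lra.
Qed.


Lemma sumT (F : V * bool -> R) : \sum_a F a = \sum_u (F (u, true) + F (u, false)).
Proof.
rewrite (eq_bigr (fun p => (fun u (b : bool) => F (u, b)) p.1 p.2)); last by case.
rewrite -(pair_bigA _ (fun u (b : bool) => F (u, b))); apply: eq_bigr => u _.
by rewrite big_bool.
Qed.

Lemma step1 : \sum_u \sum_v `|round_load W P A u - round_load W P A v| <=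
  (\sum_a \sum_b `|x2 a - x2 b|) / 2.
Proof.
have E : \sum_a \sum_b `|x2 a - x2 b| = \sum_u \sum_v
   (`|x2 (u, true) - x2 (v, true)| + `|x2 (u, true) - x2 (v, false)|
  + `|x2 (u, false) - x2 (v, true)| + `|x2 (u, false) - x2 (v, false)|).
  rewrite sumT; apply: eq_bigr => u _; rewrite !sumT -big_split /=.
  apply: eq_bigr => v _; lra.
rewrite E mulr_suml; apply: ler_sum => u _; rewrite mulr_suml; apply: ler_sum => v _.
rewrite !round_x2 opprD addrA.
have := abs4 (x2 (u, true)) (x2 (u, false)) (x2 (v, true)) (x2 (v, false)); lra.
Qed.

Lemma psi_x1 : \sum_a \sum_b `|x1 a - x1 b| = 2 * \sum_u \sum_v `|W u - W v|.
Proof.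
rewrite sumT mulr_sumr; apply: eq_bigr => u _; rewrite !sumT mulr_sumr -big_split /=.
apply: eq_bigr => v _; rewrite /x1 /= -mulrBl normrM (ger0_norm (_ : 0 <= 2^-1)) ?invr_ge0 ?ler0n //.
lra.
Qed.

Lemma round_bound : phi (round_load W P A) <= phi W - Dr W A / 2.
Proof.
rewrite !phi_half.
have h1 := step1. have h2 := step2. have h3 := psi_x1.
have h4 : \sum_a dd a = 2 * Dr W A by exact: sum_d.
lra.
Qed.

End Main.

Theorem lemma2 (R : realFieldType) (V : finType) (G : nat -> rel V)
    (w : nat -> V -> R) (prop acc : nat -> V -> option V) :
  (forall r : nat, (1 <= r)%N -> simple_connected (G r)) ->
  (forall v : V, 0 <= w 0%N v) ->
  (forall r : nat, (1 <= r)%N -> valid_prop (G r) (w r.-1) (prop r)) ->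
  (forall r : nat, (1 <= r)%N -> valid_acc (w r.-1) (prop r) (acc r)) ->
  (forall r : nat, (1 <= r)%N ->
     forall v : V, w r v = round_load (w r.-1) (prop r) (acc r) v) ->
  forall r : nat, (1 <= r)%N ->
    phi (w r) <= phi (w r.-1) - Dr (w r.-1) (acc r) / 2.
Proof.
move=> _ _ _ hacc hload r hr.
have hA : forall v u, acc r v = Some u -> prop r u = Some v.
  move=> v u e; have := hacc r hr v; rewrite e; by case.
have -> : phi (w r) = phi (round_load (w r.-1) (prop r) (acc r)).
  by rewrite /phi; apply: eq_bigr => u _; apply: eq_bigr => v _; rewrite !hload.
exact: round_bound.
Qed.
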